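(* Let $(S,\mathcal{D}_S)$ be an $(n,\delta)$-indexing algorithm over alphabet $\Sigma_S$ with at most $k$ misdecodings. Let $c\in\Sigma_{\mathcal C}^n$ be any codeword, sent via the indexing procedure. Then for every corruption consisting of at most $n\delta$ insertions and deletions, the string $m'\in(\Sigma_{\mathcal C}\cup\{?\})^n$ produced by the indexing procedure has half-error distance at most $n\delta+2k$ from $c$. If moreover $(S,\mathcal{D}_S)$ is error-free, this half-error distance is at most $n\delta+k$.
   Context: Indexing problem. Fix $n$, $\delta$, and a string $S\in\Sigma_S^n$. An adversary applies at most $n\delta$ insertions and deletions to $S$, yielding a received string $S_\tau$; this is described by an order-preserving alignment in which each symbol $S[i]$ is either deleted or delivered unchanged as a unique symbol $S_\tau[j]$, and each symbol of $S_\tau$ is either delivered from a unique $S[i]$ or inserted. Position $j$ of $S_\tau$ is successfully transmitted if it was delivered from some $S[i]$; it is then correctly decoded if the algorithm outputs $i$ for it. An $(n,\delta)$-indexing algorithm $(S,\mathcal D_S)$ consists of $S$ and an algorithm $\mathcal D_S$ which, for any such corruption, outputs for every position of $S_\tau$ either $\bot$ or an index in $\{1,\dots,n\}$. It has at most $k$ misdecodings if for every corruption with at most $n\delta$ insertions and deletions, at most $k$ successfully transmitted positions are not correctly decoded (a $\bot$ output counts as not correctly decoded). It is error-free if every non-$\bot$ output is correct, i.e., it never outputs an index other than the true origin index of a successfully transmitted symbol (and outputs $\bot$ for inserted symbols). Indexing procedure: given a codeword $c\in\Sigma_{\mathcal C}^n$, the sender transmits the string over $\Sigma_{\mathcal C}\times\Sigma_S$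 whose $i$-th symbol is $(c[i],S[i])$. The channel applies at most $n\delta$ insertions and deletions. The receiver applies $\mathcal D_S$ to the sequence of second components of the received string; then for each $i\in\{1,\dots,n\}$, if exactly one received position $j$ was assigned index $i$, it sets $m'_i$ to the first component of the $j$-th received symbol, and otherwise sets $m'_i=?$ (an erasure). Half-error distance between $c$ and $m'$: the number of $i$ with $m'_i=?$ plus twice the number of $i$ with $m'_i\neq ?$ and $m'_i\neq c[i]$. *)

(* Defs.v *)
From mathcomp Require Import all_boot all_order all_algebra.
Set Implicit Arguments. Unset Strict Implicit. Unset Printing Implicit Defensive.
Import Order.TTheory GRing.Theory Num.Theory.

(* A received string is a
   sequence r : seq T together with an alignment a : seq (option 'I_n) of the
   same length: a`_j = Some i means position j of r was delivered (unchanged)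
   from position i of the source; a`_j = None means position j was inserted. *)
Definition is_alignment (n : nat) (T : Type) (s : 'I_n -> T)
    (r : seq T) (a : seq (option 'I_n)) : Prop :=
  [/\ size a = size r,
      (forall (j : nat) (i : 'I_n), nth None a j = Some i -> onth r j = Some (s i))
    & (forall (j1 j2 : nat) (i1 i2 : 'I_n), (j1 < j2)%N ->
         nth None a j1 = Some i1 -> nth None a j2 = Some i2 -> (i1 < i2)%N)].

Definition n_delivered (n : nat) (a : seq (option 'I_n)) : nat :=
  count (fun o => o != None) a.

Definition n_insdel (n : nat)  (r_size : nat) (a : seq (option 'I_n)) : nat :=
  (n - n_delivered a) + (r_size - n_delivered a).
Arguments n_insdel : clear implicits.

Definition valid_corruption (R : realFieldType) (n : nat) (delta : R) (T : Type)
    (s : 'I_n -> T) (r : seq T) (a : seq (option 'I_n)) : Prop :=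
  is_alignment s r a /\ ((n_insdel n (size r) a)%:R <= n%:R * delta)%R.

(* A decoder maps a received string to one output per position:
   None = bottom, Some i = index i.  Output at position j is nth None (D r) j. *)
Definition decoder (n : nat) (SS : Type) := seq SS -> seq (option 'I_n).

Definition n_misdecoded (n : nat) (SS : Type) (D : decoder n SS)
    (r : seq SS) (a : seq (option 'I_n)) : nat :=
  count (fun j => (nth None a j != None) && (nth None (D r) j != nth None a j))
        (iota 0 (size r)).

Definition at_most_k_misdecodings (R : realFieldType) (n : nat) (delta : R)
    (SS : Type) (S : 'I_n -> SS) (D : decoder n SS) (k : nat) : Prop :=
  forall (r : seq SS) (a : seq (option 'I_n)),
    valid_corruption delta S r a -> (n_misdecoded D r a <= k)%N.

Definition error_free (R : realFieldType) (n : nat) (delta : R)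
    (SS : Type) (S : 'I_n -> SS) (D : decoder n SS) : Prop :=
  forall (r : seq SS) (a : seq (option 'I_n)),
    valid_corruption delta S r a ->
    forall j, (j < size r)%N ->
      nth None (D r) j = None \/ nth None (D r) j = nth None a j.

Definition transmitted (n : nat) (SC SS : Type) (c : 'I_n -> SC) (S : 'I_n -> SS)
  : 'I_n -> SC * SS := fun i => (c i, S i).

(* The receiver's output m' (None = erasure '?') *)
Definition indexing_output (n : nat) (SC SS : Type) (D : decoder n SS)
    (r : seq (SC * SS)) : 'I_n -> option SC :=
  fun i =>
    let o := D (map snd r) in
    match [seq j <- iota 0 (size r) | nth None o j == Some i] with
    | [:: j] => omap fst (onth r j)
    | _ => None
    end.

Definition half_error_dist (n : nat) (SC : eqType) (c : 'I_n -> SC)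
    (m' : 'I_n -> option SC) : nat :=
  #|[pred i | m' i == None]| +
  2 * #|[pred i | (m' i != None) && (m' i != Some (c i))]|.

(* Main.v *)
Require Import Defs.
From mathcomp Require Import all_boot all_order all_algebra.
From mathcomp Require Import zify.
Import Order.TTheory GRing.Theory Num.Theory.

Lemma count_split (T : Type) (p q : pred T) (s : seq T) :
  count p s = count (fun x => p x && q x) s + count (fun x => p x && ~~ q x) s.
Proof. elim: s => //= x s ->; case: (p x); case: (q x) => /=; lia. Qed.

Lemma card_sumb (n : nat) (p : pred 'I_n) :
  #|[pred i | p i]| = \sum_(i < n) (p i : nat).
Proof.
rewrite -sum1_card big_mkcond /=; apply: eq_bigr => i _; by rewrite inE; case: (p i).
Qed.

Lemma exch (n : nat) (O : nat -> option 'I_n) (p : pred nat) (s : seq nat) :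
  \sum_(i < n) count (fun j => p j && (O j == Some i)) s =
  count (fun j => p j && (O j != None)) s.
Proof.
elim: s => [|x s IH] /=; first by rewrite big1.
rewrite big_split /= IH; congr (_ + _).
case: (p x) => /=; last by rewrite big1.
case: (O x) => [i0|] /=; last by rewrite big1.
rewrite (bigD1 i0) //= eqxx big1 // => i Hi.
by case: eqP => // -[E]; rewrite E eqxx in Hi.
Qed.

Lemma size_le1 (s : seq nat) :
  sorted ltn s -> (forall x y, x \in s -> y \in s -> x < y -> False) -> size s <= 1.
Proof.
case: s => [|x [|y t]] //= /andP[xy _] H.
by exfalso; apply: (H x y); rewrite ?inE ?eqxx ?orbT.
Qed.

Lemma per_index (n : nat) (SS : Type) (SC : eqType) (S : 'I_n -> SS) (D : decoder n SS)
  (c : 'I_n -> SC) (r : seq (SC * SS)) (a : seq (option 'I_n))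
  (Hal : is_alignment (transmitted c S) r a) (i : 'I_n) (Oo : nat -> option 'I_n) :
  Oo = nth None (D (map snd r)) ->
  (indexing_output D r i == None) + 2 * ((indexing_output D r i != None) && (indexing_output D r i != Some (c i)))
  + count (fun j => ((Oo j != None) && (Oo j == nth None a j)) && (Oo j == Some i)) (iota 0 (size r))
  <= 1 + count (fun j => ((Oo j != None) && (Oo j != nth None a j)) && (Oo j == Some i)) (iota 0 (size r)).
Proof.
move=> HO.
set L := [seq j <- iota 0 (size r) | Oo j == Some i].
have E p : count (fun j => p j && (Oo j == Some i)) (iota 0 (size r)) = count p L.
  by rewrite count_filter.
rewrite !E.
have Hm : indexing_output D r i = match L with [:: j] => omap fst (onth r j) | _ => None end.
  by rewrite /indexing_output /L HO.
have HL : forall j, j \in L -> (j < size r) && (Oo j == Some i).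
  by move=> j; rewrite mem_filter mem_iota add0n andbC.
have Hs : sorted ltn L by apply: sorted_filter; [exact: ltn_trans | exact: iota_ltn_sorted].
case: Hal => Hsz Hnth Hinc.
set good := (fun j => (Oo j != None) && (Oo j == nth None a j)).
set bad := (fun j => (Oo j != None) && (Oo j != nth None a j)).
have Hgb : count good L + count bad L = size L.
  rewrite -(count_predT L).
  have -> : count predT L = count (fun j => Oo j != None) L.
    by apply: eq_in_count => x /HL /andP[_ /eqP ->].
  by rewrite (@count_split _ (fun j => Oo j != None) (fun j => Oo j == nth None a j)).
have Hg1 : count good L <= 1.
  rewrite -size_filter; apply: size_le1.
    by apply: sorted_filter => //; exact: ltn_trans.
  move=> x y; rewrite !mem_filter => /andP[gx /andP[/eqP Ox _]] /andP[gy /andP[/eqP Oy _]] xy.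
  move: gx gy; rewrite /good Ox Oy /= => /eqP ax /eqP ay.
  by have := Hinc x y i i xy (esym ax) (esym ay); rewrite ltnn.
rewrite Hm; case EL: L HL Hs Hgb Hg1 => [|j [|j2 t]] HL Hs Hgb Hg1 /=.
- by rewrite muln0.
- have /andP[jr /eqP Oj] := HL j (mem_head _ _).
  rewrite /good /bad /= Oj /=.

  case: (boolP (Some i == nth None a j)) => /= HA.
  + have := Hnth j i (esym (eqP HA)).
    by rewrite /transmitted => -> /=; rewrite eqxx.
  + have [x ->] : exists x, onth r j = Some x.
      by rewrite onthE (nth_map (c i, S i)) //; eexists.
    by rewrite /=; case: (Some x.1 == Some (c i)).
- move: Hgb Hg1 => /=; lia.
Qed.
Theorem theorem10 (R : realFieldType) (n : nat) (delta : R)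
    (SS : Type) (SC : eqType) (S : 'I_n -> SS) (D : decoder n SS) (k : nat)
    (c : 'I_n -> SC) :
  at_most_k_misdecodings delta S D k ->
  forall (r : seq (SC * SS)) (a : seq (option 'I_n)),
    valid_corruption delta (transmitted c S) r a ->
    ((half_error_dist c (indexing_output D r))%:R <= n%:R * delta + (2 * k)%:R)%R /\
    (error_free delta S D ->
     ((half_error_dist c (indexing_output D r))%:R <= n%:R * delta + k%:R)%R).
Proof.
move=> Hk r a [Hal Hins].
set m := size r.
set Oo := nth None (D (map snd r)).
set A := nth None a.
set good := fun j => (Oo j != None) && (Oo j == A j).
set bad := fun j => (Oo j != None) && (Oo j != A j).
set half := half_error_dist c (indexing_output D r).
have Hsum : half + count good (iota 0 m) <= n + count bad (iota 0 m).
  have -> : half = \sum_(i < n) ((indexing_output D r i == None) + 2 * ((indexing_output D r i != None) && (indexing_output D r i != Some (c i)))).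
    by rewrite /half /half_error_dist !card_sumb big_split /= big_distrr.
  have Eg : count good (iota 0 m) = \sum_(i < n) count (fun j => good j && (Oo j == Some i)) (iota 0 m).
    rewrite exch; apply: eq_count => j; rewrite /good; case: (Oo j != None) => //=; by rewrite andbT.
  have Eb : count bad (iota 0 m) = \sum_(i < n) count (fun j => bad j && (Oo j == Some i)) (iota 0 m).
    rewrite exch; apply: eq_count => j; rewrite /bad; case: (Oo j != None) => //=; by rewrite andbT.
  rewrite Eg Eb -big_split /=.
  have En : n = \sum_(i < n) 1 by rewrite sum_nat_const card_ord muln1.
  rewrite [n in _ <= n + _]En -big_split /=; apply: leq_sum => i _.
  exact: (@per_index _ _ _ _ _ _ _ _ Hal i Oo (erefl _)).
have HvS : valid_corruption delta S (map snd r) a.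
  case: Hal => Hsz Hnth Hinc; split; last by rewrite size_map.
  split => //; first by rewrite size_map.
  by move=> j i /Hnth; rewrite onth_map => ->.
set d := n_delivered a.
set k' := n_misdecoded D (map snd r) a.
have Hk' : k' <= k by apply: Hk.
have Ek' : k' = count (fun j => (A j != None) && (Oo j != A j)) (iota 0 m) by rewrite /k' /n_misdecoded size_map.
have Hsza : size a = m by case: Hal.
have Ecnt q : count q a = count (fun j => q (A j)) (iota 0 m).
  by rewrite -{1}(mkseq_nth None a) /mkseq count_map Hsza.
have Hd : d = count good (iota 0 m) + k'.
  rewrite /d /n_delivered Ecnt Ek' (@count_split _ _ (fun j => Oo j == A j)); congr (_ + _).
  apply: eq_count => j /=; rewrite /good; case: (Oo j =P A j) => [->|_]; by rewrite ?eqxx ?andbF ?andbT.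
have Hnone : count (fun j => A j == None) (iota 0 m) + d = m.
  rewrite /d /n_delivered Ecnt -{3}(size_iota 0 m) -(count_predC (fun j => A j == None)).
  by [].
have HB : count bad (iota 0 m) <= count (fun j => A j == None) (iota 0 m) + k'.
  rewrite (@count_split _ _ (fun j => A j == None)) Ek'; apply: leq_add; apply: sub_count => j /=.
    by case/andP.
  by rewrite /bad => /andP[/andP[_ ->] ->].
have Hins' : ((n_insdel n m a)%:R <= n%:R * delta)%R by [].
split.
- apply: le_trans (_ : ((n_insdel n m a + 2 * k)%:R <= _)%R).
    rewrite ler_nat /n_insdel -/d; lia.
  by rewrite natrD lerD2r.
- move=> Hef.
  have HB0 : count bad (iota 0 m) = 0.
    rewrite -[RHS](count_pred0 (iota 0 m)); apply: eq_in_count => j.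
    rewrite mem_iota add0n /= => jm; rewrite /bad /Oo /A.
    have jm' : j < size (map snd r) by rewrite size_map.
    have [->|->] := Hef _ _ HvS j jm'; by rewrite ?eqxx ?andbF.
  apply: le_trans (_ : ((n_insdel n m a + k)%:R <= _)%R).
    rewrite ler_nat /n_insdel -/d; lia.
  by rewrite natrD lerD2r.
Qed.
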